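(* Fix $i$. Suppose the following hold. (C1) $\varepsilon_{it}=g_i(\mathcal{F}_{it})$ with $\mathcal{F}_{it}=(\dots,\eta_{i,t-1},\eta_{it})$, $\eta_{it}$ i.i.d. across $t$, $g_i$ measurable, $\mathbb{E}[\varepsilon_{it}]=0$ and $\|\varepsilon_{it}\|_q\le C<\infty$ for some $q>4$. (C3) $\sum_{s\ge0}\delta_q(g_i,s)<\infty$ and $\sum_{s\ge t}\delta_q(g_i,s)=O(t^{-\gamma}(\log t)^{-A})$ with $A>\frac23(1/q+1+\gamma)$ and $\gamma=\{q^2-4+(q-2)\sqrt{q^2+20q+4}\}/(8q)$. (C4) For $1\le j\le d$, $X_{it,j}=h_{ij}(\mathcal{G}_{it,j})$ with $\mathcal{G}_{it,j}=(\dots,\xi_{i,t-1,j},\xi_{it,j})$, $\xi_{it,j}$ i.i.d. across $t$, $h_{ij}$ measurable, $\mathbb{E}[X_{it,j}]=0$ and $\|X_{it,j}\|_{q'}<\infty$, where $q'>\max\{4,\theta q\}$ for a fixed constant $\theta>0$. (C6) For all $j$, $\sum_{s\ge0}\delta_{q'}(h_{ij},s)<\infty$ and $\sum_{s\ge t}\delta_{q'}(h_{ij},s)=O(t^{-\alpha})$ for some $\alpha>1/2-1/q'$. Define $\mathbf{a}_i(\mathcal{H}_{it})=\Delta\mathbf{X}_{it}\Delta\varepsilon_{it}$ with components $a_{ij}$, and $\mathbf{b}_i(\mathcal{G}_{it})=\Delta\mathbf{X}_{it}\Delta\mathbf{X}_{it}^\top$ with entries $b_{ikl}$, where $\Delta\mathbf{X}_{it}=\mathbf{X}_{it}-\mathbf{X}_{i,t-1}$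 and $\Delta\varepsilon_{it}=\varepsilon_{it}-\varepsilon_{i,t-1}$. Then for all $j,k,l\in\{1,\dots,d\}$: \[ \sum_{s=t}^\infty\delta_p(a_{ij},s)=O(t^{-\alpha_1})\ \text{for } p=\min\{q,q'\}/2 \text{ and some } \alpha_1>1/2-1/p, \] \[ \sum_{s=t}^\infty\delta_p(b_{ikl},s)=O(t^{-\alpha_2})\ \text{for } p=q'/2 \text{ and some } \alpha_2>1/2-1/p. \]
   Context: Physical dependence measure: for i.i.d. innovations $\zeta_t$, $\mathcal{F}_t=(\dots,\zeta_{t-1},\zeta_t)$ and measurable $g$, $\delta_q(g,t)=\|g(\mathcal{F}_t)-g(\mathcal{F}_t')\|_q$, where $\mathcal{F}_t'$ is $\mathcal{F}_t$ with $\zeta_0$ replaced by an independent copy $\zeta_0'$; $\|V\|_q=(\mathbb{E}|V|^q)^{1/q}$. The component $a_{ij}$ is regarded as a function of $\mathcal{H}_{it,j}=(\dots,\nu_{i,t-1,j},\nu_{it,j})$ with joint innovations $\nu_{it,j}=(\eta_{it},\xi_{it,j})$, and $b_{ikl}$ as a function of $\mathcal{G}_{it}=(\mathcal{G}_{it,1},\dots,\mathcal{G}_{it,d})$; their physical dependence measures are computed with respect to these innovation sequences (replacing the time-$0$ innovation by an independent copy). *)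

(* Defs.v *)
From HB Require Import structures.
From mathcomp Require Import all_boot all_order all_algebra.
From mathcomp Require Import all_classical all_reals all_analysis.
Set Implicit Arguments. Unset Strict Implicit. Unset Printing Implicit Defensive.
Import Order.TTheory GRing.Theory Num.Theory.
Import numFieldNormedType.Exports.
Local Open Scope classical_set_scope.
Local Open Scope ring_scope.

Definition mutually_independent {d d'} {Omega : measurableType d}
  {U : measurableType d'} {R : realType} (P : probability Omega R)
  {I : eqType} (X : I -> Omega -> U) : Prop :=
  (forall i, measurable_fun setT (X i)) /\
  forall (J : seq I) (B : I -> set U), uniq J -> (forall i, measurable (B i)) ->
    P (\big[setI/setT]_(i <- J) (X i @^-1` B i)) =
    (\prod_(i <- J) P (X i @^-1` B i))%E.

Definition identically_distributed {d d'} {Omega : measurableType d}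
  {U : measurableType d'} {R : realType} (P : probability Omega R)
  {I : Type} (X : I -> Omega -> U) : Prop :=
  forall i j (B : set U), measurable B -> P (X i @^-1` B) = P (X j @^-1` B).

(** A history (..., z_{t-1}, z_t) is encoded as w : nat -> U with w s = z_{t-s}.
    The sigma-algebra on histories is the product (cylinder) sigma-algebra,
    generated by the coordinate maps. *)
Definition coord_sets {d'} (U : measurableType d') : set (set (nat -> U)) :=
  fun C => exists (s : nat) (A : set U), measurable A /\ C = (fun w => w s) @^-1` A.

Definition hist_measurable {d'} {U : measurableType d'} {R : realType}
  (g : (nat -> U) -> R) : Prop :=
  forall B : set R, measurable B -> <<s (@coord_sets _ U) >> (g @^-1` B).

Definition hist {Omega U : Type} (zeta : int -> Omega -> U) (t : int) (w : Omega)
  : nat -> U := fun s => zeta (t - s%:Z) w.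

(** F_t' : F_t with zeta_0 replaced by the independent copy zeta0' *)
Definition hist' {Omega U : Type} (zeta : int -> Omega -> U) (zeta0' : Omega -> U)
  (t : int) (w : Omega) : nat -> U :=
  fun s => if t - s%:Z == 0 then zeta0' w else zeta (t - s%:Z) w.

Definition hshift {U : Type} (w : nat -> U) : nat -> U := fun s => w s.+1.

Definition physdep {d d'} {Omega : measurableType d} {U : measurableType d'}
  {R : realType} (P : probability Omega R) (zeta : int -> Omega -> U)
  (zeta0' : Omega -> U) (p : R) (G : (nat -> U) -> R) (t : nat) : \bar R :=
  Lnorm P p%:E (fun w => (G (hist zeta t%:Z w) - G (hist' zeta zeta0' t%:Z w))%:E).

Definition tail_bigO {R : realType} (delta : nat -> \bar R) (rate : nat -> R) : Prop :=
  exists (C : R) (N : nat), forall t : nat, (N <= t)%N ->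
    (\sum_(t <= s <oo) delta s <= (C * rate t)%:E)%E.

(* Main.v *)
Require Import Defs.
From HB Require Import structures.
From mathcomp Require Import all_boot all_order all_algebra.
From mathcomp Require Import all_classical all_reals all_analysis.
From mathcomp Require Import measurable_realfun.
From mathcomp Require Import ring lra.
Import Order.TTheory GRing.Theory Num.Theory.
Import numFieldNormedType.Exports.
Local Open Scope classical_set_scope.
Local Open Scope ring_scope.

Section Stat.
Context (R : realType) (dO : measure_display) (Omega : measurableType dO)
  (P : probability Omega R) (dV : measure_display) (V : measurableType dV).
Local Notation M := (g_sigma_algebraType (@coord_sets _ V)).

Definition cyl (n : nat) (B : nat -> set V) : set (nat -> V) :=
  [set w | forall s, (s < n)%N -> B s (w s)].

Definition cylG : set (set (nat -> V)) :=
  [set C | exists n B, (forall s, measurable (B s)) /\ C = cyl n B].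

Lemma cyl_measurable n B : (forall s, measurable (B s)) ->
  (measurable : set (set M)) (cyl n B).
Proof.
move=> mB; elim: n => [|n IH].
  rewrite (_ : cyl 0 B = setT); first exact: measurableT.
  by apply/seteqP; split => w //=.
rewrite (_ : cyl n.+1 B = cyl n B `&` ((fun w => w n) @^-1` B n)).
  apply: measurableI => //; apply: sub_sigma_algebra; exists n, (B n); split => //.
apply/seteqP; split => w /=.
  move=> h; split; last exact: h.
  by move=> s sn; apply: h; rewrite ltnS ltnW.
move=> [h1 h2] s; rewrite ltnS leq_eqVlt => /orP[/eqP -> //|]; exact: h1.
Qed.

Lemma measurableM : (measurable : set (set M)) = <<s cylG>>.
Proof.
apply/seteqP; split.
- move=> A mA; apply: (smallest_sub _ _ mA); first exact: smallest_sigma_algebra.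
  move=> C [s [A' [mA' ->]]]; apply: sub_sigma_algebra.
  exists s.+1, (fun k => if k == s then A' else setT); split.
    by move=> k; case: ifP.
  apply/seteqP; split => w /=.
    by move=> Aws k _; case: eqP => [->|].
  by move=> h; have := h s (ltnSn s); rewrite eqxx.
- move=> A mA; apply: (smallest_sub _ _ mA); first exact: sigma_algebra_measurable.
  by move=> C [n [B [mB ->]]]; exact: cyl_measurable.
Qed.

Lemma cylG_setI : setI_closed cylG.
Proof.
move=> _ _ [n1 [B1 [mB1 ->]]] [n2 [B2 [mB2 ->]]].
exists (maxn n1 n2), (fun s => (if (s < n1)%N then B1 s else setT) `&`
  (if (s < n2)%N then B2 s else setT)); split.
  by move=> s; apply: measurableI; case: ifP.
apply/seteqP; split => w /=.
  move=> [h1 h2] s _; split; case: ifP => // sn; [exact: h1|exact: h2].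
move=> h; split => s sn.
  by have := h s (leq_trans sn (leq_maxl n1 n2)); rewrite sn => -[].
by have := h s (leq_trans sn (leq_maxr n1 n2)); rewrite sn => -[].
Qed.

Variable Z : int -> Omega -> V.
Hypothesis mZ : forall t, measurable_fun setT (Z t).
Hypothesis indep : forall (J : seq int) (B : int -> set V), uniq J ->
  (forall i, measurable (B i)) ->
  P (\big[setI/setT]_(i <- J) (Z i @^-1` B i)) =
    (\prod_(i <- J) P (Z i @^-1` B i))%E.
Hypothesis ident : forall i j (B : set V), measurable B ->
  P (Z i @^-1` B) = P (Z j @^-1` B).

Lemma hist_mfun t : measurable_fun setT (hist Z t : Omega -> M).
Proof.
apply: (@measurability _ _ Omega M setT _ (@coord_sets _ V)) => //.
move=> _ [_ [s [A [mA ->]]] <-].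
exact (mZ (t - s%:Z) measurableT _ mA).
Qed.

Lemma hist'_mfun (Z0 : Omega -> V) (mZ0 : measurable_fun setT Z0) t :
  measurable_fun setT (hist' Z Z0 t : Omega -> M).
Proof.
apply: (@measurability _ _ Omega M setT _ (@coord_sets _ V)) => //.
move=> _ [_ [s [A [mA ->]]] <-].
rewrite (_ : hist' Z Z0 t @^-1` _ = (if t - s%:Z == 0 then Z0 else Z (t - s%:Z)) @^-1` A); last first.
  by apply/seteqP; split => x /=; rewrite /hist'; case: ifP.
case: ifP => _; [exact (mZ0 measurableT _ mA)|exact (mZ (t - s%:Z) measurableT _ mA)].
Qed.

Lemma bigcapE (J : seq int) (B : int -> set V) :
  \big[setI/setT]_(i <- J) (Z i @^-1` B i) = [set x | forall i, i \in J -> B i (Z i x)].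
Proof.
elim: J => [|i J IH]; first by rewrite big_nil; apply/seteqP; split.
rewrite big_cons IH; apply/seteqP; split => x /=.
  move=> [Bi h] k; rewrite in_cons => /orP [/eqP -> //| /h //].
move=> h; split; first by apply: h; exact: mem_head.
by move=> k kJ; apply: h; rewrite in_cons kJ orbT.
Qed.

Lemma subsub (t : int) (s : nat) : t - (t - s%:Z) = s%:Z.
Proof. by rewrite opprB addrC subrK. Qed.

Lemma cyl_prob t n B : (forall s, measurable (B s)) ->
  P (hist Z t @^-1` cyl n B) = (\prod_(s <- iota 0 n) P (Z 0 @^-1` B s))%E.
Proof.
move=> mB.
pose J := map (fun s : nat => t - s%:Z) (iota 0 n).
pose B' := fun i : int => B `|t - i|%N.
have -> : hist Z t @^-1` cyl n B = \big[setI/setT]_(i <- J) (Z i @^-1` B' i).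
  rewrite bigcapE; apply/seteqP; split => x /=.
    move=> h i /mapP [s]; rewrite mem_iota add0n => /andP[_ sn] ->.
    by rewrite /B' subsub /=; exact: h.
  move=> h s sn; have := h (t - s%:Z); rewrite /B' subsub /=; apply.
  by apply/mapP; exists s => //; rewrite mem_iota add0n sn.
rewrite indep; last 2 first.
- rewrite map_inj_uniq ?iota_uniq // => a b h.
  have : a%:Z = b%:Z by apply: oppr_inj; apply: (addrI t).
  by case.
- by move=> i; exact: mB.
rewrite big_map; apply: eq_bigr => s _; rewrite /B' subsub /=; exact: ident.
Qed.

Definition histM t : Omega -> M := hist Z t.
Definition histRV t : {RV P >-> M} :=
  HB.pack (histM t) (isMeasurableFun.Build _ _ _ _ (histM t) (hist_mfun t)).

Lemma dist_eq t A : measurable A ->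
  distribution P (histRV t) A = distribution P (histRV 0) A.
Proof.
move=> mA.
have := @measure_unique _ R M cylG (fun=> setT) measurableM cylG_setI.
move=> /(_ _ _ (distribution P (histRV t)) (distribution P (histRV 0))).
apply => //.
- move=> _; exists 0%N, (fun=> setT); split => //.
  by apply/seteqP; split => w //=.
- by apply/seteqP; split => // w _; exists 0%N.
- move=> _ [n [B [mB ->]]].
  have h1 := cyl_prob t n B mB; have h0 := cyl_prob 0 n B mB.
  exact: (etrans h1 (esym h0)).
move=> _; apply: (le_lt_trans (@probability_le1 _ _ _ (distribution P (histRV t)) setT measurableT)).
by rewrite ltry.
Qed.

Lemma stat_Lnorm (F : (nat -> V) -> R) (hF : hist_measurable F) r t :
  Lnorm P r%:E (EFin \o (fun w => F (hist Z t w))) =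
  Lnorm P r%:E (EFin \o (fun w => F (hist Z 0 w))).
Proof.
rewrite unlock /=; congr (_ `^ _)%E.
have mFM : @measurable_fun _ _ M (\bar R) setT (fun v => ((`|F v| `^ r)%R)%:E).
  apply/measurable_EFinP; apply: (@measurableT_comp _ _ _ _ _ _ (@powR R ^~ r)) => //.
  apply: measurableT_comp => //.
  by move=> _ B mB; rewrite setTI; exact: hF.
transitivity (\int[distribution P (histRV t)]_v ((`|F v| `^ r)%R)%:E)%E.
  rewrite ge0_integral_distribution//; try by move=> y; rewrite lee_fin powR_ge0.
transitivity (\int[distribution P (histRV 0)]_v ((`|F v| `^ r)%R)%:E)%E.
  by apply: eq_measure_integral => A mA _; exact: dist_eq.
rewrite ge0_integral_distribution//; try by move=> y; rewrite lee_fin powR_ge0.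
Qed.

End Stat.
Section LnormLemmas.
Context (R : realType) (d : measure_display) (T : measurableType d).
Local Open Scope ereal_scope.

Lemma LnormE (mu : {measure set T -> \bar R}) (p : R) (f : T -> R) :
  Lnorm mu p%:E (EFin \o f) = (\int[mu]_x ((`|f x| `^ p)%R)%:E) `^ p^-1.
Proof.
by rewrite unlock; congr (_ `^ _); apply: eq_integral => x _; rewrite /= poweR_EFin.
Qed.

Lemma int_pow_ge0 (mu : {measure set T -> \bar R}) (p : R) (f : T -> R) :
  0 <= \int[mu]_x ((`|f x| `^ p)%R)%:E.
Proof. by apply: integral_ge0 => x _; rewrite lee_fin powR_ge0. Qed.

Lemma mpow (f : T -> R) (p : R) : measurable_fun setT f ->
  measurable_fun setT (fun x => (`|f x| `^ p)%R).
Proof.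
move=> mf; apply: (@measurableT_comp _ _ _ _ _ _ (@powR R ^~ p)) => //.
exact: measurableT_comp.
Qed.

Lemma Lprod (mu : {measure set T -> \bar R}) (f g : T -> R) (p : R) :
  measurable_fun setT f -> measurable_fun setT g -> (0 < p)%R ->
  Lnorm mu p%:E (EFin \o (f \* g)%R) <=
  Lnorm mu (2 * p)%:E (EFin \o f) * Lnorm mu (2 * p)%:E (EFin \o g).
Proof.
move=> mf mg p0.
pose F x := (`|f x| `^ p)%R; pose G x := (`|g x| `^ p)%R.
have H := @hoelder _ _ _ mu F G 2 2 (@mpow f p mf) (@mpow g p mg) (ltr0Sn _ 1) (ltr0Sn _ 1).
have /H {H} : (2^-1 + 2^-1 = 1 :> R)%R.
  by have := splitr (1:R); rewrite !mul1r => <-.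
rewrite !LnormE invr1.
rewrite poweRe1; last exact: int_pow_ge0.
have e1 : forall x, (`|(F \* G)%R x| `^ 1 = `|(f \* g)%R x| `^ p)%R.
  move=> x; rewrite powRr1 // /F /G /= ger0_norm ?mulr_ge0 ?powR_ge0//.
  by rewrite normrM powRM.
have e2 : forall h : T -> R, forall x, (Num.norm (Num.norm (h x) `^ p) `^ 2 = `|h x| `^ (2 * p))%R.
  by move=> h x; rewrite ger0_norm ?powR_ge0// -powRrM mulrC.
under eq_integral do rewrite e1.
have eF : \int[mu]_x ((`|F x| `^ 2)%R)%:E = \int[mu]_x ((`|f x| `^ (2 * p))%R)%:E.
  by apply: eq_integral => x _; rewrite e2.
have eG : \int[mu]_x ((`|G x| `^ 2)%R)%:E = \int[mu]_x ((`|g x| `^ (2 * p))%R)%:E.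
  by apply: eq_integral => x _; rewrite e2.
rewrite eF eG.
move=> H.
rewrite invfM poweRrM [X in _ <= _ * X]poweRrM -poweRM; try exact: poweR_ge0.
apply: gt0_ler_poweR => //.
- by rewrite invr_ge0 ltW.
- by rewrite in_itv /= leey andbT; exact: int_pow_ge0.
- by rewrite in_itv /= leey andbT; exact: mule_ge0 (poweR_ge0 _ _) (poweR_ge0 _ _).
Qed.
Lemma Lmono (P : probability T R) (f : T -> R) (r q : R) :
  measurable_fun setT f -> (0 < r)%R -> (r <= q)%R ->
  Lnorm P r%:E (EFin \o f) <= Lnorm P q%:E (EFin \o f).
Proof.
move=> mf r0; rewrite le_eqVlt => /predU1P[<-//|rq].
have q0 : (0 < q)%R by rewrite (lt_trans r0).
pose F x := (`|f x| `^ r)%R.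
pose a := (q / r)%R; pose b := ((1 - a^-1)^-1)%R.
have a1 : (1 < a)%R by rewrite /a ltr_pdivlMr// mul1r.
have a0 : (0 < a)%R by rewrite (lt_trans ltr01).
have b0 : (0 < b)%R by rewrite /b invr_gt0 subr_gt0 invf_lt1.
have ab : (a^-1 + b^-1 = 1)%R by rewrite /b invrK addrC subrK.
have H := @hoelder _ _ _ P F (cst 1%R) a b (@mpow f r mf) (measurable_cst _) a0 b0 ab.
have P1 : (P : {measure set T -> \bar R}) setT = 1 := probability_setT P.
rewrite Lnorm_cst1 P1 poweR1r mule1 in H.
rewrite !LnormE invr1 poweRe1 in H; last exact: int_pow_ge0.
have e1 : \int[P]_x ((`|(F \* cst 1%R)%R x| `^ 1)%R)%:E = \int[P]_x ((`|f x| `^ r)%R)%:E.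
  apply: eq_integral => x _; rewrite /= mulr1 powRr1 // ger0_norm //.
  exact: powR_ge0.
have e2 : \int[P]_x ((`|F x| `^ a)%R)%:E = \int[P]_x ((`|f x| `^ q)%R)%:E.
  apply: eq_integral => x _; rewrite /F ger0_norm ?powR_ge0// -powRrM /a.
  by rewrite mulrC divfK // gt_eqF.
rewrite e1 e2 in H.
rewrite !LnormE.
have -> : (q^-1 = a^-1 * r^-1)%R.
  by rewrite /a invf_div mulrAC mulfV ?mul1r // gt_eqF.
rewrite poweRrM.
apply: gt0_ler_poweR => //.
- by rewrite invr_ge0 ltW.
- by rewrite in_itv /= leey andbT; exact: int_pow_ge0.
- by rewrite in_itv /= leey andbT; exact: poweR_ge0.
Qed.

Lemma LnormN (mu : {measure set T -> \bar R}) (p : R) (f : T -> R) :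
  Lnorm mu p%:E (EFin \o (fun x => - f x)%R) = Lnorm mu p%:E (EFin \o f).
Proof.
by rewrite !LnormE; congr (_ `^ _); apply: eq_integral => x _; rewrite normrN.
Qed.

Lemma Ladd (mu : {measure set T -> \bar R}) (p : R) (f g : T -> R) :
  measurable_fun setT f -> measurable_fun setT g -> (1 <= p)%R ->
  Lnorm mu p%:E (EFin \o (fun x => f x + g x)%R) <=
  Lnorm mu p%:E (EFin \o f) + Lnorm mu p%:E (EFin \o g).
Proof. move=> mf mg p1; exact: (@minkowski_EFin _ _ _ mu f g p mf mg p1). Qed.

Lemma Lsub (mu : {measure set T -> \bar R}) (p : R) (f g : T -> R) :
  measurable_fun setT f -> measurable_fun setT g -> (1 <= p)%R ->
  Lnorm mu p%:E (EFin \o (fun x => f x - g x)%R) <=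
  Lnorm mu p%:E (EFin \o f) + Lnorm mu p%:E (EFin \o g).
Proof.
move=> mf mg p1; rewrite -(LnormN mu p g).
apply: (@minkowski_EFin _ _ _ mu f (fun x => - g x)%R p mf _ p1).
exact: measurableT_comp.
Qed.

Lemma Lprod_diff (mu : {measure set T -> \bar R}) (p : R) (u1 u2 v1 v2 : T -> R) :
  measurable_fun setT u1 -> measurable_fun setT u2 ->
  measurable_fun setT v1 -> measurable_fun setT v2 -> (1 <= p)%R ->
  Lnorm mu p%:E (EFin \o (fun x => u1 x * v1 x - u2 x * v2 x)%R) <=
  Lnorm mu (2 * p)%:E (EFin \o (fun x => u1 x - u2 x)%R) * Lnorm mu (2 * p)%:E (EFin \o v1) +
  Lnorm mu (2 * p)%:E (EFin \o u2) * Lnorm mu (2 * p)%:E (EFin \o (fun x => v1 x - v2 x)%R).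
Proof.
move=> m1 m2 m3 m4 p1.
have p0 : (0 < p)%R by rewrite (lt_le_trans ltr01).
rewrite (@eq_Lnorm _ _ _ mu p%:E _
  (EFin \o (fun x => (u1 x - u2 x) * v1 x + u2 x * (v1 x - v2 x))%R)); last first.
  by move=> x /=; congr EFin; ring.
have mA : measurable_fun setT (fun x => (u1 x - u2 x) * v1 x)%R.
  by apply: measurable_funM => //; exact: measurable_funB.
have mB : measurable_fun setT (fun x => u2 x * (v1 x - v2 x))%R.
  by apply: measurable_funM => //; exact: measurable_funB.
apply: le_trans (@Ladd mu p _ _ mA mB p1) _.
apply: leeD.
- exact: (@Lprod mu (fun x => u1 x - u2 x)%R v1 p (measurable_funB m1 m2) m3 p0).
- exact: (@Lprod mu u2 (fun x => v1 x - v2 x)%R p m2 (measurable_funB m3 m4) p0).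
Qed.

End LnormLemmas.
Section Tail.
Context (R : realType).
Local Notation rate b := (fun t : nat => (t%:R : R) `^ (- b)).

Lemma rate_ge0 b t : 0 <= (t%:R : R) `^ (- b).
Proof. exact: powR_ge0. Qed.

Lemma tb_maxC (D : nat -> \bar R) (r : nat -> R) :
  (forall t, 0 <= r t) -> tail_bigO D r ->
  exists C N, 0 <= C /\ forall t, (N <= t)%N ->
    (\sum_(t <= s <oo) D s <= (C * r t)%:E)%E.
Proof.
move=> r0 [C [N h]]; exists (Num.max C 0), N; split; first by rewrite le_max lexx orbT.
move=> t Nt; apply: (le_trans (h t Nt)); rewrite lee_fin ler_wpM2r//.
by rewrite le_max lexx.
Qed.

Lemma shift_le (b : R) (t : nat) : 0 <= b <= 1 -> (1 <= t)%N ->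
  (t%:R : R) `^ (- b) <= 2 * (t.+1%:R) `^ (- b).
Proof.
move=> /andP[b0 b1] t1.
have tp : (0 < (t%:R : R)) by rewrite ltr0n.
rewrite !powRN.
have p1 : 0 < (t%:R : R) `^ b by rewrite powR_gt0.
have p2 : 0 < (t.+1%:R : R) `^ b by rewrite powR_gt0.
rewrite (_ : 2 * _^-1 = ((t.+1%:R `^ b) / 2)^-1); last by rewrite invf_div.
rewrite lef_pV2 ?posrE ?divr_gt0 // ler_pdivrMr // mulrC.
have h1 : (t.+1%:R : R) `^ b <= (2 * t%:R) `^ b.
  apply: ge0_ler_powR => //; rewrite ?nnegrE ?mulr_ge0 ?ler0n//.
  by rewrite -natrM ler_nat mul2n -addnn -addn1 leq_add2l.
apply: (le_trans h1); rewrite powRM ?ler0n// ler_wpM2r ?powR_ge0//.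
have := @ler1_powR R 2 b; rewrite ler1n => /(_ isT b1) //.
Qed.

Lemma sum_shift (D : nat -> \bar R) t : (forall s, (0 <= D s)%E) ->
  (\sum_(t.+1 <= s <oo) D s.-1 = \sum_(t <= s <oo) D s)%E.
Proof.
move=> D0.
rewrite -nneseries_addn//; rewrite -[RHS]nneseries_addn//.
by apply: eq_eseriesr => i _; rewrite addnS.
Qed.

Lemma tb_shift (D : nat -> \bar R) (b : R) : (forall s, (0 <= D s)%E) ->
  0 <= b <= 1 -> tail_bigO D (rate b) -> tail_bigO (fun s => D s.-1) (rate b).
Proof.
move=> D0 b01 /(@tb_maxC D (rate b) (@rate_ge0 b)) [C [N [C0 h]]].
exists (C * 2), N.+2 => t Nt.
case: t Nt => // t Nt.
rewrite sum_shift//; apply: (le_trans (h t (ltnW Nt))).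
rewrite lee_fin -mulrA ler_wpM2l//; apply: shift_le => //.
exact: leq_trans (ltn0Sn N) Nt.
Qed.

Lemma tb_add (D1 D2 : nat -> \bar R) r : (forall t, 0 <= r t) ->
  (forall s, (0 <= D1 s)%E) -> (forall s, (0 <= D2 s)%E) ->
  tail_bigO D1 r -> tail_bigO D2 r -> tail_bigO (fun s => D1 s + D2 s)%E r.
Proof.
move=> r0 D10 D20 [C1 [N1 h1]] [C2 [N2 h2]].
exists (C1 + C2), (maxn N1 N2) => t Nt.
rewrite nneseriesD//; rewrite mulrDl EFinD; apply: leeD.
  by apply: h1; apply: leq_trans Nt; exact: leq_maxl.
by apply: h2; apply: leq_trans Nt; exact: leq_maxr.
Qed.

Lemma tb_scale (D : nat -> \bar R) r (K : R) : 0 <= K ->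
  (forall s, (0 <= D s)%E) -> tail_bigO D r -> tail_bigO (fun s => K%:E * D s)%E r.
Proof.
move=> K0 D0 [C [N h]]; exists (K * C), N => t Nt.
rewrite nneseriesZl// -mulrA EFinM; apply: lee_pmul => //; first exact: nneseries_ge0.
exact: h.
Qed.

Lemma tb_le (E D : nat -> \bar R) r N0 : (forall s, (0 <= E s)%E) ->
  (forall s, (0 <= D s)%E) ->
  (forall s, (N0 <= s)%N -> (E s <= D s)%E) ->
  tail_bigO D r -> tail_bigO E r.
Proof.
move=> E0 D0 ED [C [N h]]; exists C, (maxn N N0) => t Nt.
rewrite -nneseries_addn//.
apply: le_trans (h t (leq_trans (leq_maxl _ _) Nt)).
rewrite -[X in (_ <= X)%E]nneseries_addn//.
apply: lee_nneseries => i _ //; apply: ED.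
apply: leq_trans (leq_trans (leq_maxr N N0) Nt) _; exact: leq_addl.
Qed.

Lemma tb_rate_mono (D : nat -> \bar R) (a b : R) : b <= a ->
  tail_bigO D (rate a) -> tail_bigO D (rate b).
Proof.
move=> ba /(@tb_maxC D (rate a) (@rate_ge0 a)) [C [N [C0 h]]].
exists C, N.+1 => t Nt; apply: le_trans (h t (ltnW Nt)) _.
rewrite lee_fin ler_wpM2l//; apply: ler_powR; last by rewrite lerN2.
by rewrite ler1n; apply: leq_trans Nt.
Qed.

Lemma ln_pow_le (A : R) (t : nat) : 0 <= A -> (2 <= t)%N ->
  (ln (t%:R : R)) `^ (- A) <= (ln 2) `^ (- A).
Proof.
move=> A0 t2.
have l2 : 0 < ln (2 : R) by rewrite ln_gt0// ltr1n.
have lt : ln (2 : R) <= ln (t%:R) by rewrite ler_ln ?posrE ?ltr0n ?ler_nat// (leq_trans _ t2).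
have lt0 : 0 < ln (t%:R : R) by apply: lt_le_trans lt.
rewrite !powRN lef_pV2 ?posrE ?powR_gt0//.
by apply: ge0_ler_powR => //; rewrite nnegrE ltW.
Qed.

Lemma tb_rate_eps (D : nat -> \bar R) (g A b : R) : b <= g -> 0 <= A ->
  tail_bigO D (fun t => (t%:R : R) `^ (- g) * (ln (t%:R : R)) `^ (- A)) ->
  tail_bigO D (rate b).
Proof.
move=> bg A0 [C [N h]].
exists (Num.max C 0 * (ln 2) `^ (- A)), (maxn N 2) => t Nt.
apply: le_trans (h t (leq_trans (leq_maxl _ _) Nt)) _.
have t2 : (2 <= t)%N by apply: leq_trans (leq_maxr _ _) Nt.
rewrite lee_fin.
apply: (@le_trans _ _ (Num.max C 0 * ((t%:R : R) `^ (- g) * (ln (t%:R : R)) `^ (- A)))).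
  by rewrite ler_wpM2r ?mulr_ge0 ?powR_ge0// le_max lexx.
rewrite -mulrA ler_wpM2l ?le_max ?lexx ?orbT// mulrC.
apply: ler_pM; rewrite ?powR_ge0//; first exact: ln_pow_le.
apply: ler_powR; last by rewrite lerN2.
by rewrite ler1n (leq_trans _ t2).
Qed.

End Tail.
Arguments LnormE {R d T} mu p f.
Arguments Lprod {R d T} mu f g p.
Arguments Lmono {R d T} P f r q.
Arguments Ladd {R d T} mu p f g.
Arguments Lsub {R d T} mu p f g.
Arguments Lprod_diff {R d T} mu p u1 u2 v1 v2.

Section Main.
Context (R : realType) (dO : measure_display) (Omega : measurableType dO)
  (P : probability Omega R) (dU : measure_display) (U : measurableType dU)
  (zeta : int -> Omega -> U) (zeta0' : Omega -> U).
Local Open Scope ereal_scope.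

Lemma int_shift (n k : nat) : (n.+1%:Z - k.+1%:Z = n%:Z - k%:Z)%R.
Proof. by rewrite !intS opprD addrACA subrr add0r. Qed.

Lemma hshift_hist (n : nat) w : hshift (hist zeta n.+1%:Z w) = hist zeta n%:Z w.
Proof. by apply/funext => k; rewrite /hshift /hist int_shift. Qed.

Lemma hshift_hist' (n : nat) w :
  hshift (hist' zeta zeta0' n.+1%:Z w) = hist' zeta zeta0' n%:Z w.
Proof. by apply/funext => k; rewrite /hshift /hist' int_shift. Qed.

Section F.
Variables (F : (nat -> U) -> R) (Q r M S : R).
Hypothesis r0 : (1 <= r)%R.
Hypothesis rQ : (r <= Q)%R.
Hypothesis mF : forall t, measurable_fun setT (fun w => F (hist zeta t w)).
Hypothesis mF' : forall t, measurable_fun setT (fun w => F (hist' zeta zeta0' t w)).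
Hypothesis hM : forall t, Lnorm P Q%:E (EFin \o (fun w => F (hist zeta t w))) <= M%:E.
Hypothesis hS : forall s, physdep P zeta zeta0' Q F s <= S%:E.

Let rpos : (0 < r)%R. Proof. by rewrite (lt_le_trans ltr01). Qed.

Lemma bnd_dd (n : nat) :
  Lnorm P r%:E (EFin \o (fun w => (F (hist zeta n.+1%:Z w) - F (hist zeta n%:Z w)) -
     (F (hist' zeta zeta0' n.+1%:Z w) - F (hist' zeta zeta0' n%:Z w)))%R) <=
  physdep P zeta zeta0' Q F n.+1 + physdep P zeta zeta0' Q F n.
Proof.
rewrite (@eq_Lnorm _ _ _ P r%:E _ (EFin \o (fun w =>
   (F (hist zeta n.+1%:Z w) - F (hist' zeta zeta0' n.+1%:Z w)) -
   (F (hist zeta n%:Z w) - F (hist' zeta zeta0' n%:Z w)))%R)); last first.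
  by move=> x /=; congr EFin; ring.
apply: le_trans (Lsub P r _ _ _ _ r0) _.
- exact: measurable_funB.
- exact: measurable_funB.
apply: leeD; rewrite /physdep.
- exact: (Lmono P _ r Q (measurable_funB (mF _) (mF' _)) rpos rQ).
- exact: (Lmono P _ r Q (measurable_funB (mF _) (mF' _)) rpos rQ).
Qed.

Lemma bnd_d (t1 t2 : int) :
  Lnorm P r%:E (EFin \o (fun w => F (hist zeta t1 w) - F (hist zeta t2 w))%R) <=
  (M + M)%:E.
Proof.
apply: le_trans (Lsub P r _ _ _ _ r0) _ => //.
rewrite EFinD; apply: leeD.
- exact: le_trans (Lmono P _ r Q (mF _) rpos rQ) (hM _).
- exact: le_trans (Lmono P _ r Q (mF _) rpos rQ) (hM _).
Qed.

Lemma bnd_d' (n : nat) :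
  Lnorm P r%:E (EFin \o (fun w => F (hist' zeta zeta0' n.+1%:Z w) -
     F (hist' zeta zeta0' n%:Z w))%R) <= (M + M + (S + S))%:E.
Proof.
rewrite (@eq_Lnorm _ _ _ P r%:E _ (EFin \o (fun w =>
   (F (hist zeta n.+1%:Z w) - F (hist zeta n%:Z w)) -
   ((F (hist zeta n.+1%:Z w) - F (hist zeta n%:Z w)) -
    (F (hist' zeta zeta0' n.+1%:Z w) - F (hist' zeta zeta0' n%:Z w))))%R)); last first.
  by move=> x /=; congr EFin; ring.
apply: le_trans (Lsub P r _ _ _ _ r0) _.
- exact: measurable_funB.
- by apply: measurable_funB; exact: measurable_funB.
rewrite EFinD; apply: leeD; first exact: bnd_d.
apply: le_trans (bnd_dd n) _; rewrite EFinD; exact: leeD.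
Qed.

End F.
Lemma per_s (p Q1 Q2 M1 M2 S1 : R) (F1 F2 : (nat -> U) -> R) (n : nat) :
  (1 <= p)%R -> (2 * p <= Q1)%R -> (2 * p <= Q2)%R ->
  (forall t, measurable_fun setT (fun w => F1 (hist zeta t w))) ->
  (forall t, measurable_fun setT (fun w => F1 (hist' zeta zeta0' t w))) ->
  (forall t, measurable_fun setT (fun w => F2 (hist zeta t w))) ->
  (forall t, measurable_fun setT (fun w => F2 (hist' zeta zeta0' t w))) ->
  (forall t, Lnorm P Q1%:E (EFin \o (fun w => F1 (hist zeta t w))) <= M1%:E) ->
  (forall t, Lnorm P Q2%:E (EFin \o (fun w => F2 (hist zeta t w))) <= M2%:E) ->
  (forall s, physdep P zeta zeta0' Q1 F1 s <= S1%:E) ->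
  physdep P zeta zeta0' p
    (fun v => (F1 v - F1 (hshift v)) * (F2 v - F2 (hshift v)))%R n.+1 <=
  (M2 + M2)%:E * (physdep P zeta zeta0' Q1 F1 n.+1 + physdep P zeta zeta0' Q1 F1 n) +
  (M1 + M1 + (S1 + S1))%:E *
    (physdep P zeta zeta0' Q2 F2 n.+1 + physdep P zeta zeta0' Q2 F2 n).
Proof.
move=> p1 pQ1 pQ2 mF1 mF1' mF2 mF2' hM1 hM2 hS1.
have r1 : (1 <= 2 * p)%R by lra.
rewrite {1}/physdep.
rewrite (@eq_Lnorm _ _ _ P p%:E _ (EFin \o (fun w =>
  (F1 (hist zeta n.+1%:Z w) - F1 (hist zeta n%:Z w)) *
    (F2 (hist zeta n.+1%:Z w) - F2 (hist zeta n%:Z w)) -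
  (F1 (hist' zeta zeta0' n.+1%:Z w) - F1 (hist' zeta zeta0' n%:Z w)) *
    (F2 (hist' zeta zeta0' n.+1%:Z w) - F2 (hist' zeta zeta0' n%:Z w)))%R));
  last by move=> w /=; rewrite hshift_hist hshift_hist'.
apply: le_trans (Lprod_diff P p _ _ _ _ (measurable_funB (mF1 _) (mF1 _))
  (measurable_funB (mF1' _) (mF1' _)) (measurable_funB (mF2 _) (mF2 _))
  (measurable_funB (mF2' _) (mF2' _)) p1) _.
apply: leeD.
- rewrite muleC; apply: lee_pmul; try exact: Lnorm_ge0.
  + exact: (bnd_d F2 Q2 (2 * p)%R M2 r1 pQ2 mF2 hM2).
  + exact: (bnd_dd F1 Q1 (2 * p)%R r1 pQ1 mF1 mF1' n).
- apply: lee_pmul; try exact: Lnorm_ge0.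
  + exact: (bnd_d' F1 Q1 (2 * p)%R M1 S1 r1 pQ1 mF1 mF1' hM1 hS1 n).
  + exact: (bnd_dd F2 Q2 (2 * p)%R r1 pQ2 mF2 mF2' n).
Qed.

Lemma term_le_sum (D : nat -> \bar R) s : (forall i, 0 <= D i) ->
  D s <= \sum_(0 <= i <oo) D i.
Proof.
move=> D0; apply: le_trans (nneseries_lim_ge s.+1 (fun n _ _ => D0 n)).
rewrite big_nat_recr //=; apply: leeDr.
by apply: sume_ge0 => i _.
Qed.

Hypothesis MI : mutually_independent P
  (fun o : option int => match o with Some t => zeta t | None => zeta0' end).
Hypothesis ID : identically_distributed P
  (fun o : option int => match o with Some t => zeta t | None => zeta0' end).

Lemma mz t : measurable_fun setT (zeta t). Proof. exact: (MI.1 (Some t)). Qed.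
Lemma mz0 : measurable_fun setT zeta0'. Proof. exact: (MI.1 None). Qed.

Section proc.
Context (dV : measure_display) (V : measurableType dV) (f : U -> V).
Hypothesis mf : measurable_fun setT f.
Let Zf := fun t w => f (zeta t w).
Let Z0f := fun w => f (zeta0' w).

Let mZf t : measurable_fun setT (Zf t).
Proof. exact: measurableT_comp mf (mz t). Qed.
Let mZ0f : measurable_fun setT Z0f.
Proof. exact: measurableT_comp mf mz0. Qed.

Let mpre (B : set V) : measurable B -> measurable (f @^-1` B).
Proof. by move=> mB; have := mf measurableT B mB; rewrite setTI. Qed.

Let indepZf (J : seq int) (B : int -> set V) : uniq J ->
  (forall i, measurable (B i)) ->
  P (\big[setI/setT]_(i <- J) (Zf i @^-1` B i)) = \prod_(i <- J) P (Zf i @^-1` B i).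
Proof.
move=> uJ mB.
have := MI.2 (map Some J) (fun o => if o is Some i then f @^-1` B i else setT).
rewrite !big_map; apply.
- by rewrite map_inj_uniq // => ? ? [].
- by move=> [i|]; [exact: mpre | exact: measurableT].
Qed.

Let identZf i j (B : set V) : measurable B -> P (Zf i @^-1` B) = P (Zf j @^-1` B).
Proof. by move=> mB; exact (ID (Some i) (Some j) (f @^-1` B) (mpre B mB)). Qed.

Lemma comp_hist' t w : f \o hist' zeta zeta0' t w = hist' Zf Z0f t w.
Proof. by apply/funext => k; rewrite /hist' /=; case: ifP. Qed.

Variable F : (nat -> V) -> R.
Hypothesis hF : hist_measurable F.

Let mFM : measurable_fun (setT : set (g_sigma_algebraType (@coord_sets _ V))) F.
Proof. by move=> _ B mB; rewrite setTI; exact: hF. Qed.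

Lemma meas_h t : measurable_fun setT (fun w => F (f \o hist zeta t w)).
Proof. exact (measurableT_comp mFM (@hist_mfun _ _ _ _ Zf mZf t)). Qed.

Lemma meas_h' t : measurable_fun setT (fun w => F (f \o hist' zeta zeta0' t w)).
Proof.
rewrite (_ : (fun w => _) = (fun w => F (hist' Zf Z0f t w))); last first.
  by apply/funext => w; rewrite comp_hist'.
exact (measurableT_comp mFM (@hist'_mfun _ _ _ _ Zf mZf Z0f mZ0f t)).
Qed.

Lemma stat_h r t : Lnorm P r%:E (EFin \o (fun w => F (f \o hist zeta t w))) =
  Lnorm P r%:E (EFin \o (fun w => F (f \o hist zeta 0 w))).
Proof. exact (@stat_Lnorm _ _ _ P _ _ Zf mZf indepZf identZf F hF r t). Qed.

End proc.
End Main.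

Theorem lemmaA2
  (R : realType) (dO : measure_display) (Omega : measurableType dO)
  (P : probability Omega R)
  (dU dE dX : measure_display) (U : measurableType dU)
  (Teta : measurableType dE) (Txi : measurableType dX) (d : nat)
  (* joint innovations zeta_t = (eta_t, xi_{t,1}, ..., xi_{t,d}) and copy zeta0' *)
  (zeta : int -> Omega -> U) (zeta0' : Omega -> U)
  (peta : U -> Teta) (pxi : 'I_d -> U -> Txi)
  (g : (nat -> Teta) -> R) (h : 'I_d -> (nat -> Txi) -> R)
  (q q' theta gamma A alpha C : R) :
  measurable_fun setT peta -> (forall j, measurable_fun setT (pxi j)) ->
  mutually_independent P (fun o : option int =>
     match o with Some t => zeta t | None => zeta0' end) ->
  identically_distributed P (fun o : option int =>
     match o with Some t => zeta t | None => zeta0' end) ->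
  let eps (t : int) := fun w => g (peta \o hist zeta t w) in
  let X (j : 'I_d) (t : int) := fun w => h j (pxi j \o hist zeta t w) in
  let G_eps (v : nat -> U) := g (peta \o v) in
  let G_X (j : 'I_d) (v : nat -> U) := h j (pxi j \o v) in
  (* (C1) *)
  hist_measurable g -> 4 < q ->
  (forall t, ('E_P[eps t] = 0)%E) ->
  (forall t, (Lnorm P q%:E (EFin \o eps t) <= C%:E)%E) ->
  (* (C3) *)
  gamma = (q ^+ 2 - 4 + (q - 2) * Num.sqrt (q ^+ 2 + 20 * q + 4)) / (8 * q) ->
  A > 2 / 3 * (q^-1 + 1 + gamma) ->
  (\sum_(0 <= s <oo) physdep P zeta zeta0' q G_eps s < +oo)%E ->
  tail_bigO (physdep P zeta zeta0' q G_eps)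
    (fun t => t%:R `^ (- gamma) * (ln t%:R) `^ (- A)) ->
  (* (C4) *)
  (forall j, hist_measurable (h j)) -> 0 < theta -> Num.max 4 (theta * q) < q' ->
  (forall j t, ('E_P[X j t] = 0)%E) ->
  (forall j t, (Lnorm P q'%:E (EFin \o X j t) < +oo)%E) ->
  (* (C6) *)
  (forall j, (\sum_(0 <= s <oo) physdep P zeta zeta0' q' (G_X j) s < +oo)%E) ->
  alpha > 1 / 2 - q'^-1 ->
  (forall j, tail_bigO (physdep P zeta zeta0' q' (G_X j)) (fun t => t%:R `^ (- alpha))) ->
  (* a_{ij}(H_t) = dX_{t,j} * d eps_t,  b_{ikl}(G_t) = dX_{t,k} * dX_{t,l} *)
  let a (j : 'I_d) (v : nat -> U) :=
    (G_X j v - G_X j (hshift v)) * (G_eps v - G_eps (hshift v)) in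
  let b (k l : 'I_d) (v : nat -> U) :=
    (G_X k v - G_X k (hshift v)) * (G_X l v - G_X l (hshift v)) in
  forall j k l : 'I_d,
    (let p := Num.min q q' / 2 in
     exists alpha1, alpha1 > 1 / 2 - p^-1 /\
       tail_bigO (physdep P zeta zeta0' p (a j)) (fun t => t%:R `^ (- alpha1)))
    /\
    (let p := q' / 2 in
     exists alpha2, alpha2 > 1 / 2 - p^-1 /\
       tail_bigO (physdep P zeta zeta0' p (b k l)) (fun t => t%:R `^ (- alpha2))).
Proof.
move=> mpeta mpxi MI ID eps X G_eps G_X hg q4 Eeps epsC gammaE Agt sumE tbE
  hh theta0 q'gt EX XL sumX alpha_gt tbX a b j k l.
have q'4 : 4 < q' by apply: le_lt_trans q'gt; rewrite le_max lexx.
have sq := sqrtr_ge0 (q ^+ 2 + 20 * q + 4).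
have sq2 : Num.sqrt (q ^+ 2 + 20 * q + 4) ^+ 2 = q ^+ 2 + 20 * q + 4.
  by rewrite sqr_sqrtr //; nra.
have sqq : q <= Num.sqrt (q ^+ 2 + 20 * q + 4) by nra.
have g8 : gamma * (8 * q) =
    q ^+ 2 - 4 + (q - 2) * Num.sqrt (q ^+ 2 + 20 * q + 4).
  by rewrite gammaE divfK // gt_eqF //; lra.
have g12 : 1 / 2 <= gamma by nra.
have qi0 : 0 < q^-1 by rewrite invr_gt0; lra.
have A0 : 0 <= A by lra.
have q'i0 : 0 < q'^-1 by rewrite invr_gt0; lra.
have q'i4 : q'^-1 < 4^-1 by rewrite ltf_pV2 ?posrE //; lra.
pose a1 := Num.min alpha (1 / 2).
have a1ge0 : 0 <= a1 by rewrite le_min; apply/andP; split; lra.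
have a1le1 : a1 <= 1 by rewrite ge_min; apply/orP; right; lra.
have a1a : a1 <= alpha by rewrite ge_min lexx.
have a1g : a1 <= gamma by rewrite ge_min; apply/orP; right; lra.
have a101 : 0 <= a1 <= 1 by rewrite a1ge0 a1le1.
have mXh j' t : measurable_fun setT (fun w => G_X j' (hist zeta t w)) :=
  @meas_h _ _ _ _ _ _ zeta zeta0' MI _ _ (pxi j') (mpxi j') (h j') (hh j') t.
have mXh' j' t : measurable_fun setT (fun w => G_X j' (hist' zeta zeta0' t w)) :=
  @meas_h' _ _ _ _ _ _ zeta zeta0' MI _ _ (pxi j') (mpxi j') (h j') (hh j') t.
have mEh t : measurable_fun setT (fun w => G_eps (hist zeta t w)) :=
  @meas_h _ _ _ _ _ _ zeta zeta0' MI _ _ peta mpeta g hg t.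
have mEh' t : measurable_fun setT (fun w => G_eps (hist' zeta zeta0' t w)) :=
  @meas_h' _ _ _ _ _ _ zeta zeta0' MI _ _ peta mpeta g hg t.
pose MX j' := fine (Lnorm P q'%:E (EFin \o X j' 0)).
have MX0 j' : 0 <= MX j' by apply: fine_ge0; exact: Lnorm_ge0.
have hMX j' t : (Lnorm P q'%:E (EFin \o (fun w => G_X j' (hist zeta t w))) <= (MX j')%:E)%E.
  have e := @stat_h _ _ _ _ _ _ zeta zeta0' MI ID _ _ (pxi j') (mpxi j') (h j') (hh j') q' t.
  have fin : Lnorm P q'%:E (EFin \o X j' 0) \is a fin_num.
    by rewrite ge0_fin_numE ?Lnorm_ge0 //; exact: XL.
  by rewrite /MX fineK // e.
pose SX j' := fine (\sum_(0 <= s <oo) physdep P zeta zeta0' q' (G_X j') s)%E.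
have SX0 j' : 0 <= SX j'.
  by apply: fine_ge0; apply: nneseries_ge0 => n _ _; exact: Lnorm_ge0.
have hSX j' s : (physdep P zeta zeta0' q' (G_X j') s <= (SX j')%:E)%E.
  rewrite /SX fineK; first by apply: term_le_sum => i; exact: Lnorm_ge0.
  rewrite ge0_fin_numE; first exact: sumX.
  by apply: nneseries_ge0 => n _ _; exact: Lnorm_ge0.
have C0 : 0 <= C.
  by rewrite -lee_fin; apply: le_trans (epsC 0); exact: Lnorm_ge0.
have tbXa j' : tail_bigO (physdep P zeta zeta0' q' (G_X j')) (fun t => t%:R `^ (- a1)).
  exact: (@tb_rate_mono _ _ _ _ a1a (tbX j')).
have tbEa : tail_bigO (physdep P zeta zeta0' q G_eps) (fun t => t%:R `^ (- a1)).
  exact: (@tb_rate_eps _ _ _ _ _ a1g A0 tbE).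
have pd0 p' F s : (0 <= physdep P zeta zeta0' p' F s)%E by exact: Lnorm_ge0.
have tbsum (D : nat -> \bar R) : (forall s, 0 <= D s)%E ->
    tail_bigO D (fun t => t%:R `^ (- a1)) ->
    tail_bigO (fun s => D s + D s.-1)%E (fun t => t%:R `^ (- a1)).
  move=> D0 tD; apply: tb_add.
  - by move=> t; exact: rate_ge0.
  - exact: D0.
  - by move=> s; exact: D0.
  - exact: tD.
  - exact: tb_shift.
split.
- move=> p.
  have m4 : 4 < Num.min q q' by rewrite lt_min q4 q'4.
  have mq' : Num.min q q' <= q' by rewrite ge_min lexx orbT.
  have mq : Num.min q q' <= q by rewrite ge_min lexx.
  have pinv : p^-1 = 2 * (Num.min q q')^-1 by rewrite /p invf_div.
  have mi : q'^-1 <= (Num.min q q')^-1 by rewrite lef_pV2 ?posrE //; lra.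
  have peq : p = Num.min q q' / 2 by [].
  have MXj := MX0 j; have SXj := SX0 j.
  exists a1; split.
    rewrite pinv /a1 lt_min; apply/andP; split; lra.
  apply: (@tb_le _ _ (fun s => (C + C)%:E *
      (physdep P zeta zeta0' q' (G_X j) s + physdep P zeta zeta0' q' (G_X j) s.-1) +
      (MX j + MX j + (SX j + SX j))%:E *
      (physdep P zeta zeta0' q G_eps s + physdep P zeta zeta0' q G_eps s.-1))%E _ 1).
  + by move=> s; exact: Lnorm_ge0.
  + move=> s; apply: adde_ge0; apply: mule_ge0; rewrite ?lee_fin ?adde_ge0 //;
      lra.
  + move=> [//|n] _.
    apply: (@per_s _ _ _ P _ _ zeta zeta0' p q' q (MX j) C (SX j) (G_X j) G_eps n) => //; try lra.
  + apply: tb_add; first by move=> t; exact: rate_ge0.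
    * move=> s; apply: mule_ge0; rewrite ?lee_fin ?adde_ge0 //; lra.
    * move=> s; apply: mule_ge0; rewrite ?lee_fin ?adde_ge0 //; lra.
    * apply: tb_scale; [lra | by move=> s; rewrite adde_ge0 | exact: tbsum].
    * apply: tb_scale; [lra | by move=> s; rewrite adde_ge0 | exact: tbsum].
- move=> p.
  have pinv : p^-1 = 2 * q'^-1 by rewrite /p invf_div.
  have peq : p = q' / 2 by [].
  have MXk := MX0 k; have MXl := MX0 l; have SXk := SX0 k.
  exists a1; split.
    rewrite pinv /a1 lt_min; apply/andP; split; lra.
  apply: (@tb_le _ _ (fun s => (MX l + MX l)%:E *
      (physdep P zeta zeta0' q' (G_X k) s + physdep P zeta zeta0' q' (G_X k) s.-1) +
      (MX k + MX k + (SX k + SX k))%:E *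
      (physdep P zeta zeta0' q' (G_X l) s + physdep P zeta zeta0' q' (G_X l) s.-1))%E _ 1).
  + by move=> s; exact: Lnorm_ge0.
  + move=> s; apply: adde_ge0; apply: mule_ge0; rewrite ?lee_fin ?adde_ge0 //;
      have := MX0 k; have := MX0 l; have := SX0 k; lra.
  + move=> [//|n] _.
    apply: (@per_s _ _ _ P _ _ zeta zeta0' p q' q' (MX k) (MX l) (SX k) (G_X k) (G_X l) n) => //; lra.
  + apply: tb_add; first by move=> t; exact: rate_ge0.
    * move=> s; apply: mule_ge0; rewrite ?lee_fin ?adde_ge0 //;
        have := MX0 k; have := MX0 l; have := SX0 k; lra.
    * move=> s; apply: mule_ge0; rewrite ?lee_fin ?adde_ge0 //;
        have := MX0 k; have := MX0 l; have := SX0 k; lra.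
    * apply: tb_scale; [have := MX0 l; lra | by move=> s; rewrite adde_ge0 | exact: tbsum].
    * apply: tb_scale; [have := MX0 k; have := SX0 k; lra | by move=> s; rewrite adde_ge0 | exact: tbsum].
Qed.
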